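(* Let $\alpha\in(0,1)$ and let $m\ge1$ be an integer. The $(m,m)$ Padé approximant $r_m$ of $(1+t)^{-\alpha}$ (normalized so that its denominator equals $1$ at $t=0$) is monotonically decreasing on $[0,\infty)$.
   Context: The $(m,m)$ Padé approximant of $(1+t)^{-\alpha}$ is the rational function $r_m=P_m/Q_m$ with $P_m,Q_m$ polynomials of degree at most $m$, $Q_m(0)=1$, whose Maclaurin expansion agrees with that of $(1+t)^{-\alpha}$ up to and including the coefficient of $t^{2m}$. *)

(* Defs.v *)
From HB Require Import structures.
From mathcomp Require Import all_boot all_order all_algebra.
From mathcomp Require Import reals.
Set Implicit Arguments. Unset Strict Implicit. Unset Printing Implicit Defensive.
Import Order.TTheory GRing.Theory Num.Theory.
Local Open Scope ring_scope.

(* Generalized binomial coefficient  binom(a, k) = prod_{i<k} (a - i)/(i+1).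
   The Maclaurin coefficients of (1+t)^(-alpha) are gbinom (-alpha) k. *)
Definition gbinom (R : realType) (a : R) (k : nat) : R :=
  \prod_(i < k) ((a - i%:R) / (i.+1)%:R).

(* Maclaurin coefficients c of the rational function P/Q (with Q(0) = 1):
   the (unique) power series c with Q * c = P, i.e. the Cauchy product
   of the coefficient sequence of Q with c equals the coefficient
   sequence of P. *)
Definition is_maclaurin_of_ratio (R : realType) (P Q : {poly R}) (c : nat -> R) : Prop :=
  forall k : nat, \sum_(j < k.+1) Q`_j * c (k - j)%N = P`_k.

Definition is_pade_mm (R : realType) (m : nat) (f : nat -> R) (P Q : {poly R}) : Prop :=
  [/\ (size P <= m.+1)%N, (size Q <= m.+1)%N, Q.[0] = 1 &
      exists c : nat -> R, is_maclaurin_of_ratio P Q c /\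
                           (forall k : nat, (k <= 2 * m)%N -> c k = f k)].

(* Main.v *)
Require Import Defs.
From HB Require Import structures.
From mathcomp Require Import all_boot all_order all_algebra.
From mathcomp Require Import reals.
From mathcomp Require Import all_classical all_reals.
From mathcomp Require Import topology normedtype derive realfun.
From mathcomp Require Import ring lra zify.
Import Order.TTheory GRing.Theory Num.Theory.
Import numFieldNormedType.Exports.
Local Open Scope ring_scope.

Section S.
Variable R : realType.
Implicit Types p q : {poly R}.

Definition lowz (n : nat) (p : {poly R}) := forall k, (k < n)%N -> p`_k = 0.

Lemma lowzD n p q : lowz n p -> lowz n q -> lowz n (p + q).
Proof. by move=> hp hq k kn; rewrite coefD hp ?hq ?addr0. Qed.
Lemma lowzN n p : lowz n p -> lowz n (- p).
Proof. by move=> hp k kn; rewrite coefN hp ?oppr0. Qed.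
Lemma lowzB n p q : lowz n p -> lowz n q -> lowz n (p - q).
Proof. by move=> hp hq; apply: lowzD => //; apply: lowzN. Qed.
Lemma lowzMl n p q : lowz n p -> lowz n (q * p).
Proof.
move=> hp k kn; rewrite coefM big1 // => [[j /= hj]] _.
by rewrite hp ?mulr0 //; apply: leq_ltn_trans kn; apply: leq_subr.
Qed.
Lemma lowzMr n p q : lowz n p -> lowz n (p * q).
Proof. by move=> hp; rewrite mulrC; apply: lowzMl. Qed.
Lemma lowzW n n' p : (n' <= n)%N -> lowz n p -> lowz n' p.
Proof. by move=> hn hp k kn; apply: hp; apply: leq_trans hn. Qed.
Lemma lowzX n p : lowz n p -> lowz n.+1 ('X * p).
Proof. by move=> hp [|k] kn; rewrite coefXM //= hp. Qed.
Lemma lowz_deriv n p : lowz n.+1 p -> lowz n p^`().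
Proof. by move=> hp k kn; rewrite coef_deriv hp ?mul0rn. Qed.
Lemma lowz1X n p : lowz n ((1 + 'X) * p) -> lowz n p.
Proof.
move=> h k; elim: k => [|k IH] kn.
  by have := h 0%N kn; rewrite mulrDl mul1r coefD coefXM /= addr0.
have := h k.+1 kn; rewrite mulrDl mul1r coefD coefXM /= IH ?addr0 //.
exact: ltnW.
Qed.
Lemma lowz_size n p : (size p <= n)%N -> lowz n p -> p = 0.
Proof.
move=> hs hp; apply/polyP => k; rewrite coef0.
case: (ltnP k n) => kn; first exact: hp.
by apply: nth_default; apply: leq_trans kn.
Qed.

Definition Hop (a b c : R) (Y : {poly R}) : {poly R} :=
  'X * (1 + 'X) * Y^`()^`() + (c%:P + (a + b + 1)%:P * 'X) * Y^`() + (a*b)%:P * Y.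

Lemma coefH a b c Y k : (Hop a b c Y)`_k =
  k.+1%:R * (k%:R + c) * Y`_k.+1 + (k%:R + a) * (k%:R + b) * Y`_k.
Proof.
have -> : Hop a b c Y = 'X * Y^`()^`() + 'X * ('X * Y^`()^`()) + c%:P * Y^`()
   + (a + b + 1)%:P * ('X * Y^`()) + (a * b)%:P * Y.
  by rewrite /Hop; ring.
rewrite !coefD !coefCM !coefXM !coef_deriv.
case: k => [|k]; first by rewrite /=; ring.
rewrite /= ?coefXM ?coef_deriv.
case: k => [|k]; first by rewrite /=; ring.
rewrite /=; ring.
Qed.

Lemma gbinomS (a : R) k : gbinom a k.+1 = gbinom a k * ((a - k%:R) / k.+1%:R).
Proof. by rewrite /gbinom big_ord_recr. Qed.
Lemma gbinom0 (a : R) : gbinom a 0 = 1.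
Proof. by rewrite /gbinom big_ord0. Qed.

Definition Fpol al N : {poly R} := \poly_(i < N.+1) gbinom (- al) i.

Lemma R_lowz al N : lowz N ((1 + 'X) * (Fpol al N)^`() + al%:P * Fpol al N).
Proof.
move=> k kN.
rewrite mulrDl mul1r !coefD coefXM coefCM !coef_deriv !coef_poly.
have h1 : (k.+1 < N.+1)%N by [].
have h2 : (k < N.+1)%N by apply: ltnW.
rewrite h1 h2 gbinomS.
have hk : (k.+1%:R : R) != 0 by rewrite pnatr_eq0.
case: k kN h1 h2 hk => [|k] kN h1 h2 hk /=.
  by field; rewrite ?pnatr_eq0.
rewrite ?coef_deriv ?coef_poly ?h2.
by field; rewrite -?natrD ?pnatr_eq0.
Qed.

Fixpoint qs (al : R) (m k : nat) : R :=
  match k with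
  | 0 => 1
  | k'.+1 => qs al m k' * (((m - k')%:R * (m%:R + al - k'%:R)) / (k'.+1%:R * (2 * m - k')%:R))
  end.
Definition Q0 al m : {poly R} := \poly_(i < m.+1) qs al m i.

Lemma Q0_H al m : Hop (- m%:R) (- al - m%:R) (- (2 * m%:R)) (Q0 al m) = 0.
Proof.
apply/polyP => k; rewrite coefH coef0 !coef_poly.
case: (ltnP k m) => km.
  have -> : (k < m.+1)%N by apply: ltnW.
  have -> : (k.+1 < m.+1)%N by [].
  rewrite /= natrB ?(ltnW km) // natrB; last by lia.
  rewrite natrM.
  have h1 : (k.+1%:R : R) != 0 by rewrite pnatr_eq0.
  have h2 : (2%:R * m%:R - k%:R : R) != 0.
    by rewrite -natrM -natrB ?pnatr_eq0 ?subn_eq0 -?ltnNge; lia.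
  field. by rewrite h2 nat1r pnatr_eq0.
have -> : (k.+1 < m.+1)%N = false by apply/negbTE; rewrite -leqNgt ltnS.
case: (ltnP m k) => mk.
  by rewrite ifF ?mulr0 ?addr0 //; apply/negbTE; rewrite -leqNgt.
have -> : k = m by apply/eqP; rewrite eqn_leq km mk.
by rewrite ltnSn; ring.
Qed.

Lemma qs_pos al m k : 0 < al -> (k <= m)%N -> 0 < qs al m k.
Proof.
move=> al0; elim: k => [|k IH] km //=.
have km' : (k < m)%N by [].
rewrite mulr_gt0 ?IH ?(ltnW km) //.
rewrite divr_gt0 // ?mulr_gt0 ?ltr0n ?subn_gt0 //; last by lia.
have hk : (k.+1%:R : R) <= m%:R by rewrite ler_nat.
rewrite -natr1 in hk; lra.
Qed.

Lemma id1 (al mm : R) (F G : {poly R}) :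
  let Rr := (1 + 'X) * F^`() + al%:P * F in
  (1 + 'X) * Hop (- mm) (al - mm) (- (2 * mm)) (G * F) =
  F * (1 + 'X) * Hop (- mm) (- al - mm) (- (2 * mm)) G
  + (2%:R *'X * (1 + 'X) * G^`()) * Rr
  + ('X * G * (- (1 + al)%:P)) * Rr + (G * (1 + 'X)) * ('X * Rr^`())
  + ((- (2 * mm))%:P + (- mm + (al - mm) + 1)%:P * 'X) * G * Rr.
Proof.
move=> Rr.
rewrite /Rr /Hop !(derivM, derivD, derivX, derivC, derivN) /= .
rewrite !(polyCD, polyCM, polyCN, polyC1).
ring.
Qed.

Lemma lowzXd N p : lowz N p -> lowz N ('X * p^`()).
Proof. by case: N => [|n] h; [move=> k|apply/lowzX/lowz_deriv]. Qed.

Definition Ypol al m := Q0 al m * Fpol al (2 * m).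

Lemma Y_H al m : lowz (2 * m) (Hop (- m%:R) (al - m%:R) (- (2 * m%:R)) (Ypol al m)).
Proof.
apply: lowz1X; rewrite /Ypol id1 Q0_H mulr0 add0r.
have hR := R_lowz al (2 * m).
by repeat apply: lowzD; apply: lowzMl => //; apply: lowzXd.
Qed.

Lemma Y_rec al m k : (k < 2 * m)%N ->
  k.+1%:R * (k%:R - 2 * m%:R) * (Ypol al m)`_k.+1 =
  - ((k%:R - m%:R) * (k%:R + al - m%:R) * (Ypol al m)`_k).
Proof.
move=> hk; have := Y_H al m k hk; rewrite coefH => /eqP; rewrite addr_eq0 => /eqP ->.
ring.
Qed.

Lemma Y0 al m : (Ypol al m)`_0 = 1.
Proof. by rewrite /Ypol coef0M !coef_poly /= gbinom0 mulr1. Qed.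

Lemma Y_pos al m k : 0 < al < 1 -> (k <= m)%N -> 0 < (Ypol al m)`_k.
Proof.
move=> /andP[al0 al1]; elim: k => [|k IH] km; first by rewrite Y0 ltr01.
have hk : (k < 2 * m)%N by lia.
have E := Y_rec al m k hk.
have hkm : (k.+1%:R : R) <= m%:R by rewrite ler_nat.
rewrite -natr1 in hkm.
have m0 : (0:R) <= m%:R := ler0n _ _.
have k0 : (0:R) <= k%:R := ler0n _ _.
have A : k.+1%:R * (k%:R - 2 * m%:R) < 0 :> R.
  rewrite pmulr_rlt0 ?ltr0n //; lra.
have B : - ((k%:R - m%:R) * (k%:R + al - m%:R) * (Ypol al m)`_k) < 0.
  have -> : - ((k%:R - m%:R) * (k%:R + al - m%:R) * (Ypol al m)`_k) =
    - ((m%:R - k%:R) * (m%:R - k%:R - al) * (Ypol al m)`_k) by ring.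
  by rewrite oppr_lt0 !mulr_gt0 ?IH ?(ltnW km) //; lra.
by rewrite -E (nmulr_rlt0 _ A) in B.
Qed.

Lemma Y_zero al m k : (1 <= m)%N -> (m < k <= 2 * m)%N -> (Ypol al m)`_k = 0.
Proof.
move=> m1; elim: k => [|k IH] /andP[mk k2m] //.
have hk : (k < 2 * m)%N by [].
have E := Y_rec al m k hk.
have hc : k.+1%:R * (k%:R - 2 * m%:R) != 0 :> R.
  rewrite mulf_neq0 ?pnatr_eq0 // subr_eq0 -(natrM _ 2 m) eqr_nat; lia.
have : k.+1%:R * (k%:R - 2 * m%:R) * (Ypol al m)`_k.+1 = 0.
  rewrite E; case: (ltnP m k) => km.
    by rewrite IH ?mulr0 ?oppr0 // km ltnW.
  have -> : k = m by lia.
  by rewrite subrr !mul0r oppr0.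
by move/eqP; rewrite mulf_eq0 (negbTE hc) => /eqP.
Qed.

Lemma coefM_high p q i j k : (size p <= i.+1)%N -> (size q <= j.+1)%N ->
  (i + j < k)%N -> (p * q)`_k = 0.
Proof.
move=> hp hq hk; apply: nth_default; apply: leq_trans (size_mul_leq _ _) _.
lia.
Qed.

Lemma coefM_top p q i j : (size p <= i.+1)%N -> (size q <= j.+1)%N ->
  (p * q)`_(i + j) = p`_i * q`_j.
Proof.
move=> hp hq; rewrite coefM.
have hi : (i < (i + j).+1)%N by lia.
rewrite (bigD1 (Ordinal hi)) //= addKn big1 ?addr0 // => [[l hl]] /= hne.
case: (ltnP i l) => il.
  by rewrite (leq_sizeP _ _ hp) ?mul0r.
have hli : (l < i)%N.
  rewrite ltn_neqAle il andbT; apply: contra hne => /eqP e.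
  by apply/eqP/val_inj.
by rewrite [q`_ _](leq_sizeP _ _ hq) ?mulr0 //; lia.
Qed.

Lemma size_deriv_le p n : (size p <= n.+1)%N -> (size p^`() <= n)%N.
Proof.
move=> hp; apply/leq_sizeP => j hj; rewrite coef_deriv.
by rewrite (leq_sizeP _ _ hp) ?mul0rn.
Qed.

Definition Zpd al (P G : {poly R}) :=
  (1 + 'X) * (P^`() * G - P * G^`()) + al%:P * (P * G).

Lemma Z_top al (P G : {poly R}) n : (size P <= n.+2)%N -> (size G <= n.+2)%N ->
  (forall k, (2 * n.+1 < k)%N -> (Zpd al P G)`_k = 0) /\
  (Zpd al P G)`_(2 * n.+1) = al * P`_n.+1 * G`_n.+1.
Proof.
move=> hP hG.
have hP' := size_deriv_le _ _ hP; have hG' := size_deriv_le _ _ hG.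
rewrite /Zpd; set W := P^`() * G - P * G^`().
have W0 : forall k, (2 * n.+1 <= k)%N -> W`_k = 0.
  move=> k hk; rewrite /W coefB (coefM_high _ _ _ _ _ hP' hG) ?(coefM_high _ _ _ _ _ hP hG') ?subr0 //; lia.
have Wt : W`_(n + n.+1) = 0.
  rewrite /W coefB (coefM_top _ _ _ _ hP' hG).
  have -> : (P * G^`())`_(n + n.+1) = P`_n.+1 * G^`()`_n.
    by rewrite addnC (coefM_top _ _ _ _ hP hG').
  rewrite !coef_deriv.
  by rewrite mulrnAl -mulrnAr subrr.
have Ptop : (P * G)`_(2 * n.+1) = P`_n.+1 * G`_n.+1.
  by rewrite -(coefM_top _ _ _ _ hP hG); congr (_`_ _); lia.
clearbody W.
split.
  move=> k hk; rewrite mulrDl mul1r !coefD coefXM coefCM W0; last by lia.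
  case: k hk => [|k] hk; first by lia.
  rewrite W0 ?(coefM_high _ _ _ _ _ hP hG) ?mulr0 ?addr0 //; lia.
rewrite mulrDl mul1r !coefD coefXM coefCM W0 // Ptop.
have -> : (2 * n.+1 = (n + n.+1).+1)%N by lia.
by rewrite /= Wt !add0r mulrA.
Qed.

Lemma id2 al (G F E : {poly R}) :
  Zpd al (G * F - E) G = - al%:P * G * E + (G * G) * ((1 + 'X) * F^`() + al%:P * F)
    + (1 + 'X) * (E * G^`() - E^`() * G).
Proof.
rewrite /Zpd !(derivM, derivD, derivB, derivX, derivC, derivN) /=.
ring.
Qed.

Definition P0 al m : {poly R} := \poly_(i < m.+1) (Ypol al m)`_i.

Lemma E_lowz al m : (1 <= m)%N -> lowz (2 * m).+1 (Ypol al m - P0 al m).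
Proof.
move=> m1 k hk; rewrite coefB coef_poly.
case: ltnP => km; first by rewrite subrr.
by rewrite subr0 Y_zero // km /=; lia.
Qed.

Lemma Z_lowz al m : (1 <= m)%N -> lowz (2 * m) (Zpd al (P0 al m) (Q0 al m)).
Proof.
move=> m1.
have -> : P0 al m = Q0 al m * Fpol al (2 * m) - (Ypol al m - P0 al m).
  by rewrite /Ypol opprB addrC subrK.
rewrite id2.
have hE := E_lowz al m m1.
have hE' : lowz (2 * m) (Ypol al m - P0 al m).
  exact: lowzW hE.
have hR := R_lowz al (2 * m).
apply: lowzD; [apply: lowzD|].
- by apply: lowzMl.
- by apply: lowzMl.
- apply: lowzMl; apply: lowzB; apply: lowzMr => //.
  exact: lowz_deriv.
Qed.

Lemma size_P0 al m : (size (P0 al m) <= m.+1)%N.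
Proof. exact: size_poly. Qed.
Lemma size_Q0 al m : (size (Q0 al m) <= m.+1)%N.
Proof. exact: size_poly. Qed.

Lemma Z_formula al m : (1 <= m)%N ->
  Zpd al (P0 al m) (Q0 al m) = (al * (P0 al m)`_m * (Q0 al m)`_m)%:P * 'X^(2 * m).
Proof.
case: m => [|n] // _.
have [Zh Zt] := Z_top al _ _ n (size_P0 al n.+1) (size_Q0 al n.+1).
apply/polyP => k; rewrite coefCM coefXn.
case: (ltngtP k (2 * n.+1)) => hk.
- by rewrite (Z_lowz al n.+1) // mulr0.
- by rewrite Zh // mulr0.
- by rewrite hk Zt mulr1.
Qed.

Lemma eval_lb (p : {poly R}) m t : (1 <= m)%N -> (size p <= m.+1)%N ->
  (forall i, 0 <= p`_i) -> 0 <= t -> p`_0 + p`_m * t ^+ m <= p.[t].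
Proof.
move=> m1 hs hc t0; rewrite (horner_coef_wide _ hs) big_ord_recr /=.
case: m m1 hs => [|n] // _ hs.
rewrite big_ord_recl /= expr0 mulr1 lerD2r lerDl.
by apply: sumr_ge0 => i _; rewrite mulr_ge0 ?exprn_ge0.
Qed.

Lemma P0_coef al m i : (P0 al m)`_i = if (i < m.+1)%N then (Ypol al m)`_i else 0.
Proof. by rewrite coef_poly. Qed.
Lemma Q0_coef al m i : (Q0 al m)`_i = if (i < m.+1)%N then qs al m i else 0.
Proof. by rewrite coef_poly. Qed.

Lemma P0_ge0 al m i : 0 < al < 1 -> 0 <= (P0 al m)`_i.
Proof.
move=> ha; rewrite P0_coef; case: ifP => // hi.
by apply/ltW/Y_pos.
Qed.
Lemma Q0_ge0 al m i : 0 < al < 1 -> 0 <= (Q0 al m)`_i.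
Proof.
move=> /andP[ha _]; rewrite Q0_coef; case: ifP => // hi.
by apply/ltW/qs_pos.
Qed.
Lemma P0_m al m : 0 < al < 1 -> 0 < (P0 al m)`_m.
Proof. by move=> ha; rewrite P0_coef ltnSn; apply: Y_pos. Qed.
Lemma Q0_m al m : 0 < al < 1 -> 0 < (Q0 al m)`_m.
Proof. by move=> /andP[ha _]; rewrite Q0_coef ltnSn; apply: qs_pos. Qed.
Lemma P0_0 al m : (P0 al m)`_0 = 1.
Proof. by rewrite P0_coef Y0. Qed.
Lemma Q0_0 al m : (Q0 al m)`_0 = 1.
Proof. by rewrite Q0_coef. Qed.

Lemma Zpd_eval al P G t : (Zpd al P G).[t] =
  (1 + t) * (P^`() * G - P * G^`()).[t] + al * (P.[t] * G.[t]).
Proof. by rewrite /Zpd !hornerE. Qed.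

Lemma W_neg al m t : 0 < al < 1 -> (1 <= m)%N -> 0 <= t ->
  ((P0 al m)^`() * Q0 al m - P0 al m * (Q0 al m)^`()).[t] < 0.
Proof.
move=> ha m1 t0.
have := congr1 (fun p => p.[t]) (Z_formula al m m1).
rewrite Zpd_eval hornerCM hornerXn.
set w := (_ - _).[t].
have A := eval_lb _ m t m1 (size_P0 al m) (fun i => P0_ge0 al m i ha) t0.
have B := eval_lb _ m t m1 (size_Q0 al m) (fun i => Q0_ge0 al m i ha) t0.
rewrite P0_0 in A; rewrite Q0_0 in B.
have pm := P0_m al m ha; have qm := Q0_m al m ha.
set a := (P0 al m).[t] in A *; set b := (Q0 al m).[t] in B *.
set pM := (P0 al m)`_m in A pm *; set qM := (Q0 al m)`_m in B qm *.
have u0 : 0 <= t ^+ m by rewrite exprn_ge0.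
rewrite mulnC exprM expr2; set u := t ^+ m in A B u0 *.
move=> E.
have AB : (1 + pM * u) * (1 + qM * u) <= a * b.
  apply: ler_pM => //; rewrite ?addr_ge0 ?mulr_ge0 // ?ltW //.
have pq0 : 0 <= pM * u by rewrite mulr_ge0 // ltW.
have qq0 : 0 <= qM * u by rewrite mulr_ge0 // ltW.
case/andP: ha => ha _.
have : (1 + t) * w < 0.
  have -> : (1 + t) * w = al * (pM * qM * (u * u) - a * b).
    have E' : (1 + t) * w = al * pM * qM * (u * u) - al * (a * b) by rewrite -E addrK.
    by rewrite E'; ring.
  rewrite pmulr_rlt0 // subr_lt0; apply: lt_le_trans AB.
  have -> : (1 + pM * u) * (1 + qM * u) = pM * qM * (u * u) + (1 + pM * u + qM * u) by ring.
  by rewrite ltrDl; lra.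
by rewrite pmulr_rlt0 //; lra.
Qed.

Lemma coprime_Q0P0 al m : 0 < al < 1 -> (1 <= m)%N -> coprimep (Q0 al m) (P0 al m).
Proof.
move=> ha m1; apply/coprimepP => d dQ dP.
have dZ : d %| Zpd al (P0 al m) (Q0 al m).
  rewrite /Zpd; apply: dvdp_add; apply: dvdp_mull.
    by apply: dvdp_sub; [apply: dvdp_mull|apply: dvdp_mulr].
  exact: dvdp_mulr.
have hz : al * (P0 al m)`_m * (Q0 al m)`_m != 0.
  case/andP: (ha) => ha0 _.
  by rewrite !mulf_neq0 ?gt_eqF ?P0_m ?Q0_m.
rewrite Z_formula // mul_polyC dvdpZr // in dZ.
have cX : coprimep (Q0 al m) 'X^(2 * m).
  apply: coprimep_expr.
  rewrite -[X in coprimep _ X]subr0 -polyC0 coprimep_XsubC /root horner_coef0 Q0_0.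
  exact: oner_neq0.
by move/coprimepP: cX; apply.
Qed.

Lemma pade_unique al m P Q : 0 < al < 1 -> (1 <= m)%N ->
  is_pade_mm m (gbinom (- al)) P Q -> P = P0 al m /\ Q = Q0 al m.
Proof.
move=> ha m1 [hP hQ hQ0 [c [hc hcf]]].
set F := Fpol al (2 * m).
have L1 : lowz (2 * m).+1 (Q * F - P).
  move=> k hk; rewrite coefB coefM -(hc k); apply/eqP; rewrite subr_eq0; apply/eqP.
  apply: eq_bigr => [[j hj]] _ /=; rewrite /F coef_poly ifT; last by lia.
  by rewrite hcf //; lia.
have L2 : lowz (2 * m).+1 (Q0 al m * F - P0 al m) by exact: E_lowz.
have D0 : P * Q0 al m = P0 al m * Q.
  apply/eqP; rewrite -subr_eq0; apply/eqP.
  apply: (lowz_size (2 * m).+1).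
    apply: leq_trans (size_polyD _ _) _; rewrite size_polyN geq_max.
    have hq0 := size_Q0 al m; have hp0 := size_P0 al m.
    have e : (m.+1 + m.+1).-1 = (2 * m).+1 by lia.
    apply/andP; split; apply: leq_trans (size_mul_leq _ _) _; rewrite -e -!subn1 leq_sub2r //;
      exact: leq_add.
  have -> : P * Q0 al m - P0 al m * Q = (Q0 al m * F - P0 al m) * Q - (Q * F - P) * Q0 al m.
    by ring.
  by apply: lowzB; apply: lowzMr.
have Q0nz : Q0 al m != 0.
  by apply/eqP => h; have := Q0_0 al m; rewrite h coef0 => /eqP; rewrite eq_sym oner_eq0.
have Qnz : Q != 0.
  by apply/eqP => h; move: hQ0; rewrite h horner0 => /eqP; rewrite eq_sym oner_eq0.
have dv : Q0 al m %| Q.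
  rewrite -(Gauss_dvdpr _ (coprime_Q0P0 al m ha m1)) -D0.
  exact: dvdp_mulIr.
have [D hD] := dvdpP _ _ dv.
have sQ0 : size (Q0 al m) = m.+1.
  apply/eqP; rewrite eqn_leq size_Q0 /=.
  rewrite ltnNge; apply/negP => /leq_sizeP /(_ m (leqnn m)) h.
  by have := Q0_m al m ha; rewrite h ltxx.
have Dnz : D != 0 by apply: contraNneq Qnz => h; rewrite hD h mul0r.
have sD : (size D <= 1)%N.
  move: hQ; rewrite hD size_mul // sQ0 addnS /= => h; by rewrite -(leq_add2r m) add1n.
have hD0 := size1_polyC sD.
have D1 : D`_0 = 1.
  move: hQ0; rewrite hD hD0 hornerM hornerC horner_coef0 Q0_0 mulr1. by move=> h; rewrite coefC h.

have eQ : Q = Q0 al m by rewrite hD hD0 D1 mul1r.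
split => //.
by apply: (mulIf Q0nz); rewrite D0 eQ.
Qed.
End S.

Lemma decr_ratio (R : realType) (P Q : {poly R}) :
  (forall x, 0 <= x -> Q.[x] != 0) ->
  (forall x, 0 <= x -> (P^`() * Q - P * Q^`()).[x] < 0) ->
  forall s t, 0 <= s -> s < t -> P.[t] / Q.[t] < P.[s] / Q.[s].
Proof.
move=> hQ hW s t s0 st.
pose f := (fun y => P.[y] * (Q.[y])^-1).
have D : forall x : R, 0 <= x -> is_derive x 1 f
   (P.[x] *: (- (Q.[x]) ^- 2 *: Q^`().[x]) + (Q.[x])^-1 *: P^`().[x]).
  move=> x x0.
  have hV : is_derive x 1 (fun y => (Q.[y])^-1) (- (Q.[x]) ^- 2 *: Q^`().[x]).
    exact: (is_deriveV (hQ x x0) (is_derive_poly Q x)).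
  have := is_deriveM (is_derive_poly P x) hV.
  by [].
have fd : forall x : R, 0 <= x -> derivable f x 1 by move=> x /D [].
have fv : forall x : R, 0 <= x -> derive1 f x < 0.
  move=> x x0; rewrite derive1E; case: (D x x0) => _ ->.
  have hq := hQ x x0; have hw := hW x x0.
  rewrite hornerD hornerN !hornerM in hw.
  rewrite /GRing.scale /=.
  have -> : P.[x] * (- Q.[x] ^- 2 * Q^`().[x]) + Q.[x]^-1 * P^`().[x] =
     (P^`().[x] * Q.[x] - P.[x] * Q^`().[x]) / (Q.[x] ^+ 2).
    by field.
  by rewrite pmulr_llt0 // invr_gt0 exprn_even_gt0.
apply: (@ltr0_derive1_decr _ f s t).
- by move=> x; rewrite in_itv /= => /andP[sx _]; apply: fd; lra.
- by move=> x; rewrite in_itv /= => /andP[sx _]; apply: fv; lra.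
- apply: derivable_within_continuous => x; rewrite in_itv /= => /andP[sx _].
  by apply: fd; lra.
- exact: lexx.
- exact: st.
- exact: lexx.
Qed.

Theorem mainTheorem3 (R : realType) (alpha : R) (m : nat) (P Q : {poly R}) :
  0 < alpha < 1 -> (1 <= m)%N ->
  is_pade_mm m (gbinom (- alpha)) P Q ->
  (forall t : R, 0 <= t -> Q.[t] != 0) /\
  (forall s t : R, 0 <= s -> s < t -> P.[t] / Q.[t] < P.[s] / Q.[s]).
Proof.
move=> ha m1 hp.
have [eP eQ] := pade_unique _ alpha m P Q ha m1 hp.
have hQpos : forall t : R, 0 <= t -> 0 < (Q0 R alpha m).[t].
  move=> t t0.
  have := eval_lb _ _ m t m1 (size_Q0 _ alpha m) (fun i => Q0_ge0 _ alpha m i ha) t0.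
  rewrite Q0_0; apply: lt_le_trans.
  by rewrite (lt_le_trans ltr01) // lerDl mulr_ge0 ?exprn_ge0 // ltW // Q0_m.
have hQ : forall t : R, 0 <= t -> (Q0 R alpha m).[t] != 0.
  by move=> t t0; rewrite gt_eqF // hQpos.
split; first by rewrite eQ.
move=> s t s0 st; rewrite eP eQ; apply: decr_ratio => //.
by move=> x x0; apply: W_neg.
Qed.
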